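(* Let $n,k$ be integers with $2\le k\le n/2$. If $n$ and $k-1$ are coprime, then every Gutkin $(n,k)$-gon is equiangular.
   Context: Let $P$ be a convex $n$-gon in the Euclidean plane with vertices $v_0,\dots,v_{n-1}$ in their cyclic (counterclockwise) order, indices taken modulo $n$. $P$ is a Gutkin $(n,k)$-gon if there exists an angle $\alpha$ such that for every $i$, $\angle v_{i+1}v_iv_{i+k}=\angle v_{i+k-1}v_{i+k}v_i=\alpha$, where $\angle abc$ denotes the angle at $b$ between the segments $ba$ and $bc$. Equiangular means all interior angles are equal. *)

(* Defs.v *)
From Stdlib Require Import Reals Lra Lia Arith.
Open Scope R_scope.

Definition pt : Type := (R * R)%type.

Definition vsub (a b : pt) : pt := (fst a - fst b, snd a - snd b).
Definition dot (a b : pt) : R := fst a * fst b + snd a * snd b.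
Definition cross (a b : pt) : R := fst a * snd b - snd a * fst b.
Definition norm (a : pt) : R := sqrt (dot a a).

Definition angle (a b c : pt) : R :=
  acos (dot (vsub a b) (vsub c b) / (norm (vsub a b) * norm (vsub c b))).

Definition vtx (n : nat) (v : nat -> pt) (i : nat) : pt := v (i mod n).

(* P = v_0 ... v_{n-1} is a convex n-gon with vertices in counterclockwise order:
   every other vertex lies strictly to the left of each directed edge v_i v_{i+1}. *)
Definition convex_ccw_polygon (n : nat) (v : nat -> pt) : Prop :=
  (3 <= n)%nat /\
  forall i j : nat, (i < n)%nat -> (j < n)%nat -> j <> i -> j <> ((i + 1) mod n)%nat ->
    0 < cross (vsub (vtx n v (i + 1)) (vtx n v i)) (vsub (vtx n v j) (vtx n v i)).

(* Gutkin (n,k)-gon condition (k >= 1 so that i + k - 1 is the intended index). *)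
Definition gutkin (n k : nat) (v : nat -> pt) : Prop :=
  exists alpha : R, forall i : nat,
    angle (vtx n v (i + 1)) (vtx n v i) (vtx n v (i + k)) = alpha /\
    angle (vtx n v (i + k - 1)) (vtx n v (i + k)) (vtx n v i) = alpha.

Definition interior_angle (n : nat) (v : nat -> pt) (i : nat) : R :=
  angle (vtx n v (i + n - 1)) (vtx n v i) (vtx n v (i + 1)).

Definition equiangular (n : nat) (v : nat -> pt) : Prop :=
  forall i j : nat, interior_angle n v i = interior_angle n v j.

(* Main.v *)
Require Import Defs.
From Stdlib Require Import Reals Arith Lra Lia Psatz.
Open Scope R_scope.

Definition opp (a:pt) : pt := (- fst a, - snd a).
Definition unitv (a:pt) : pt := (fst a / norm a, snd a / norm a).
Definition rot (c s : R) (a:pt) : pt := (c*fst a - s*snd a, s*fst a + c*snd a).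

Lemma lagrange a b : dot a b ^ 2 + cross a b ^ 2 = dot a a * dot b b.
Proof. unfold dot, cross; ring. Qed.

Lemma dot_self_ge a : 0 <= dot a a.
Proof. unfold dot; nra. Qed.

Lemma cross_pos_dot a b : cross a b <> 0 -> 0 < dot a a /\ 0 < dot b b.
Proof.
  intros H. pose proof (lagrange a b). pose proof (dot_self_ge a). pose proof (dot_self_ge b).
  assert (0 < cross a b ^ 2) by (simpl; rewrite Rmult_1_r; destruct (Rlt_dec 0 (cross a b)); [nra|]; assert (cross a b < 0) by lra; nra).
  assert (0 < dot a a * dot b b) by nra.
  split; nra.
Qed.

Lemma norm_pos a : 0 < dot a a -> 0 < norm a.
Proof. intros; unfold norm; apply sqrt_lt_R0; auto. Qed.

Lemma norm_sq a : norm a * norm a = dot a a.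
Proof. unfold norm; apply sqrt_sqrt, dot_self_ge. Qed.

Lemma dot_unit a b : norm a <> 0 -> norm b <> 0 ->
  dot (unitv a) (unitv b) = dot a b / (norm a * norm b).
Proof. intros; unfold unitv, dot; simpl; field; auto. Qed.

Lemma cross_unit a b : norm a <> 0 -> norm b <> 0 ->
  cross (unitv a) (unitv b) = cross a b / (norm a * norm b).
Proof. intros; unfold unitv, cross; simpl; field; auto. Qed.

Lemma unit_self a : norm a <> 0 -> dot (unitv a) (unitv a) = 1.
Proof. intros; rewrite dot_unit by auto; rewrite norm_sq; field.
  rewrite <- norm_sq. intro H'. apply H. nra. Qed.

Lemma rot_eq x y : dot x x = 1 -> y = rot (dot x y) (cross x y) x.
Proof.
  destruct x as [x1 x2], y as [y1 y2]; unfold dot, cross, rot; simpl; intros H.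
  f_equal.
  - replace y1 with (y1 * (x1*x1+x2*x2)) at 1 by (rewrite H; ring). ring.
  - replace y2 with (y2 * (x1*x1+x2*x2)) at 1 by (rewrite H; ring). ring.
Qed.

Lemma rot_dot c s x y : dot (rot c s x) (rot c s y) = (c*c+s*s) * dot x y.
Proof. unfold rot, dot; simpl; ring. Qed.

Lemma angle_rot a b alpha : 0 < cross a b ->
  acos (dot a b / (norm a * norm b)) = alpha ->
  unitv b = rot (cos alpha) (sqrt (1 - cos alpha ^ 2)) (unitv a).
Proof.
  intros Hc Ha.
  destruct (cross_pos_dot a b) as [Ha1 Hb1]; [lra|].
  pose proof (norm_pos _ Ha1). pose proof (norm_pos _ Hb1).
  assert (Hna : norm a <> 0) by lra. assert (Hnb : norm b <> 0) by lra.
  pose proof (unit_self a Hna) as Ux. pose proof (unit_self b Hnb) as Uy.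
  pose proof (lagrange (unitv a) (unitv b)) as L.
  rewrite Ux, Uy in L.
  assert (Cp : 0 < cross (unitv a) (unitv b)).
  { rewrite cross_unit by auto. apply Rdiv_lt_0_compat; auto. apply Rmult_lt_0_compat; auto. }
  rewrite <- dot_unit in Ha by auto.
  assert (Hr : -1 <= dot (unitv a) (unitv b) <= 1) by nra.
  rewrite <- Ha, cos_acos by auto.
  replace (1 - dot (unitv a) (unitv b) ^ 2) with (cross (unitv a) (unitv b) ^ 2) by lra.
  rewrite sqrt_pow2 by lra.
  apply rot_eq; auto.
Qed.

Lemma mod_ne n i d : (0 < d < n)%nat -> ((i + d) mod n <> i mod n)%nat.
Proof.
  intros Hd. assert (Hn : n <> 0%nat) by lia.
  rewrite <- Nat.Div0.add_mod_idemp_l.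
  pose proof (Nat.mod_upper_bound i n Hn).
  set (r := i mod n) in *.
  destruct (Nat.lt_ge_cases (r + d) n).
  - rewrite Nat.mod_small by lia. lia.
  - replace (r + d)%nat with ((r + d - n) + 1 * n)%nat by lia.
    rewrite Nat.Div0.mod_add, Nat.mod_small by lia. lia.
Qed.

Lemma vtx_add n v m : (n <> 0)%nat -> vtx n v (m + n) = vtx n v m.
Proof. intros; unfold vtx. replace (m + n)%nat with (m + 1 * n)%nat by lia.
  rewrite Nat.Div0.mod_add. reflexivity. Qed.

Lemma cross_flip p q r : cross (vsub p q) (vsub p r) = - cross (vsub p q) (vsub r q).
Proof. unfold cross, vsub; simpl; ring. Qed.

Lemma vsub_opp p q : vsub p q = opp (vsub q p).
Proof. unfold vsub, opp; simpl; f_equal; ring. Qed.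

Lemma cross_opp a b : cross (opp a) (opp b) = cross a b.
Proof. unfold cross, opp; simpl; ring. Qed.

Lemma dot_opp a b : dot (opp a) (opp b) = dot a b.
Proof. unfold dot, opp; simpl; ring. Qed.

Lemma dot_opp_l a b : dot (opp a) b = - dot a b.
Proof. unfold dot, opp; simpl; ring. Qed.

Lemma norm_opp a : norm (opp a) = norm a.
Proof. unfold norm; rewrite dot_opp; auto. Qed.

Lemma unit_opp a : unitv (opp a) = opp (unitv a).
Proof. unfold unitv; rewrite norm_opp; unfold opp; simpl; f_equal;
  unfold Rdiv; ring. Qed.

Lemma rot_opp c s x : rot c s (opp x) = opp (rot c s x).
Proof. unfold rot, opp; simpl; f_equal; ring. Qed.

Lemma opp_inj a b : opp a = opp b -> a = b.
Proof. destruct a, b; unfold opp; simpl; intros H; injection H; intros; f_equal; lra. Qed.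

Theorem mainTheorem10 (n k : nat) :
  (2 <= k)%nat -> (2 * k <= n)%nat -> Nat.gcd n (k - 1) = 1%nat ->
  forall v : nat -> pt,
    convex_ccw_polygon n v -> gutkin n k v -> equiangular n v.
Proof.
  intros Hk Hkn Hg v [Hn3 Hconv] [alpha Hgut].
  assert (Hn : n <> 0%nat) by lia.
  set (w := vtx n v) in *.
  assert (conv : forall i j, (j mod n <> i mod n)%nat -> (j mod n <> (i+1) mod n)%nat ->
     0 < cross (vsub (w (i+1)%nat) (w i)) (vsub (w j) (w i))).
  { intros i j H1 H2.
    pose proof (Hconv (i mod n)%nat (j mod n)%nat (Nat.mod_upper_bound _ _ Hn)
      (Nat.mod_upper_bound _ _ Hn) H1) as H.
    rewrite Nat.Div0.add_mod_idemp_l in H. specialize (H H2).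
    unfold w, vtx in *. rewrite Nat.Div0.add_mod_idemp_l, !Nat.Div0.mod_mod in H. exact H. }
  set (E := fun j => vsub (w (j+1)%nat) (w j)).
  set (c := cos alpha). set (s := sqrt (1 - cos alpha ^ 2)).
  assert (C1 : forall i, 0 < cross (E i) (vsub (w (i+k)%nat) (w i))).
  { intros i; apply conv.
    - apply mod_ne; lia.
    - replace (i + k)%nat with (i + 1 + (k-1))%nat by lia. apply mod_ne; lia. }
  assert (C2 : forall i, 0 < cross (E (i+k-1)%nat) (vsub (w i) (w (i+k-1)%nat))).
  { intros i; apply conv.
    - intro H; symmetry in H; revert H. replace (i + k - 1)%nat with (i + (k-1))%nat by lia.
      apply mod_ne; lia.
    - intro H; symmetry in H; revert H. replace (i + k - 1 + 1)%nat with (i + k)%nat by lia.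
      apply mod_ne; lia. }
  assert (Q : forall i, unitv (E (i+k-1)%nat) = rot c s (rot c s (unitv (E i)))).
  { intros i. destruct (Hgut i) as [G1 G2].
    assert (R1 : unitv (vsub (w (i+k)%nat) (w i)) = rot c s (unitv (E i))).
    { apply angle_rot; auto. }
    assert (R2 : unitv (opp (E (i+k-1)%nat)) = rot c s (unitv (opp (vsub (w (i+k)%nat) (w i))))).
    { apply angle_rot.
      - rewrite cross_opp. unfold E. replace (i+k-1+1)%nat with (i+k)%nat by lia.
        pose proof (C2 i) as H. unfold E in H.
        replace (i+k-1+1)%nat with (i+k)%nat in H by lia.
        unfold cross, vsub in *; simpl in *; lra.
      - unfold angle in G2. rewrite <- G2. f_equal.
        unfold E. replace (i+k-1+1)%nat with (i+k)%nat by lia.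
        rewrite <- !vsub_opp. unfold dot; rewrite Rmult_comm; f_equal; ring. }
    rewrite !unit_opp, R1, rot_opp in R2. apply opp_inj; auto. }
  assert (Hcs : c * c + s * s = 1).
  { unfold s. rewrite sqrt_sqrt. unfold c; simpl; lra.
    pose proof (sin2_cos2 alpha). unfold Rsqr in H. simpl. nra. }
  set (f := fun j => dot (unitv (E j)) (unitv (E (j+1)%nat))).
  assert (Hf : forall j, f (j + k - 1)%nat = f j).
  { intros j. unfold f. rewrite Q. replace (j+k-1+1)%nat with (j+1+k-1)%nat by lia.
    rewrite Q, !rot_dot, Hcs. ring. }
  assert (NE : forall j, norm (E j) <> 0).
  { intros j. pose proof (C1 j). destruct (cross_pos_dot (E j) (vsub (w (j+k)%nat) (w j))) as [H1 _].
    lra. pose proof (norm_pos _ H1). lra. }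
  set (g := interior_angle n v).
  assert (Hint : forall j, g (j+1)%nat = acos (- f j)).
  { intros j. unfold g, interior_angle, angle, f. fold w.
    replace (j + 1 + n - 1)%nat with (j + n)%nat by lia.
    assert (Hw : w (j+n)%nat = w j) by (apply vtx_add; auto). rewrite Hw.
    rewrite dot_unit by auto. f_equal.
    rewrite (vsub_opp (w j)).
    change (vsub (w (j+1)%nat) (w j)) with (E j).
    change (vsub (w (j+1+1)%nat) (w (j+1)%nat)) with (E (j+1)%nat).
    rewrite norm_opp, dot_opp_l. unfold Rdiv. ring. }
  assert (Hper : forall m, g (m + n)%nat = g m).
  { intros m. unfold g, interior_angle.
    replace (m + n + n - 1)%nat with (m + n - 1 + n)%nat by lia.
    replace (m + n + 1)%nat with (m + 1 + n)%nat by lia.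
    rewrite !vtx_add by auto. reflexivity. }
  assert (Hsh1 : forall m, (1 <= m)%nat -> g (m + (k-1))%nat = g m).
  { intros m Hm. replace m with (m - 1 + 1)%nat at 2 by lia.
    replace (m + (k-1))%nat with (m - 1 + k - 1 + 1)%nat by lia.
    rewrite !Hint, Hf. reflexivity. }
  assert (Hsh : forall m, g (m + (k-1))%nat = g m).
  { intros m. destruct m.
    - rewrite <- (Hper 0%nat), <- (Hsh1 (0+n)%nat) by lia. rewrite <- (Hper (0 + (k-1))%nat). f_equal. lia.
    - apply Hsh1; lia. }
  assert (HA : forall a m, g (m + a * (k-1))%nat = g m).
  { induction a; intros m. - f_equal; lia.
    - replace (m + S a * (k-1))%nat with (m + a * (k-1) + (k-1))%nat by lia.
      rewrite Hsh; auto. }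
  assert (HB : forall b m, g (m + b * n)%nat = g m).
  { induction b; intros m. - f_equal; lia.
    - replace (m + S b * n)%nat with (m + b * n + n)%nat by lia.
      rewrite Hper; auto. }
  destruct (Nat.gcd_bezout_pos (k-1) n) as [a [b Hab]]; [lia|].
  rewrite Nat.gcd_comm, Hg in Hab.
  assert (Hstep : forall m, g (S m) = g m).
  { intros m. rewrite <- (HB b (S m)), <- (HA a m). f_equal. lia. }
  assert (H0 : forall m, g m = g 0%nat).
  { induction m; auto. rewrite Hstep; auto. }
  intros i j. fold g. rewrite (H0 i), (H0 j). reflexivity.
Qed.
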